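(* For every positive integer $n$, $$\big(\mathrm{Id}\ast(\mathrm{Id}\cdot\delta)\big)(n)=\sigma(n)\delta(n)-\big(\mathrm{Id}^2\ast\delta\big)(n),$$ where $\mathrm{Id}\cdot\delta$ is $n\mapsto n\delta(n)$ and $\mathrm{Id}^2(n)=n^2$.
   Context: The arithmetic derivative $\delta$ is defined by $\delta(p)=1$ for every prime $p$ and $\delta(mn)=m\delta(n)+n\delta(m)$ for all positive integers $m,n$; equivalently $\delta(1)=0$ and $\delta(n)=n\sum_{p^\alpha\| n}\alpha/p$. $\mathrm{Id}(n)=n$, $\sigma(n)$ is the sum of the positive divisors of $n$. The Dirichlet convolution is $(u\ast v)(n)=\sum_{d\mid n}u(d)v(n/d)$. *)

(* Defs.v *)
From mathcomp Require Import all_boot all_order all_algebra.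
Set Implicit Arguments. Unset Strict Implicit. Unset Printing Implicit Defensive.

(* Arithmetic derivative: delta(n) = n * sum_{p^a || n} a/p
   = sum_{p prime, p | n} (logn p n) * (n %/ p)  (exact since p | n);
   delta 0 = 0 by this formula (primes 0 = [::]), delta 1 = 0. *)
Definition arith_deriv (n : nat) : nat :=
  \sum_(p <- primes n) logn p n * (n %/ p).

Definition sigma (n : nat) : nat := \sum_(d <- divisors n) d.

Definition dconv (u v : nat -> int) (n : nat) : int :=
  (\sum_(d <- divisors n) u d * v (n %/ d)%N)%R.

(* Main.v *)
Require Import Defs.
From mathcomp Require Import all_boot all_order all_algebra.
Import GRing.Theory.
From mathcomp Require Import zify.

Lemma divdivK n d : 0 < n -> d %| n -> n %/ (n %/ d) = d.
Proof.
move=> n0 dd.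
by rewrite divnA // mulKn.
Qed.

Lemma divisors_rev (n : nat) : 0 < n ->
  perm_eq (divisors n) [seq n %/ d | d <- divisors n].
Proof.
move=> n0; apply: uniq_perm; first exact: divisors_uniq.
  rewrite map_inj_in_uniq ?divisors_uniq // => a b.
  rewrite -!dvdn_divisors // => da db E.
  by rewrite -(@divdivK n a n0 da) E divdivK.
move=> d; apply/idP/mapP.
  rewrite -dvdn_divisors // => dd; exists (n %/ d).
    by rewrite -dvdn_divisors // dvdn_div.
  by rewrite divdivK.
case=> e; rewrite -dvdn_divisors // => de ->.
by rewrite -dvdn_divisors // dvdn_div.
Qed.

Definition dlt N n := \sum_(p <- iota 0 N) logn p n * (n %/ p).

Lemma deriv_dlt N n : 0 < n -> n < N -> arith_deriv n = dlt N n.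
Proof.
move=> n0 nN; rewrite /dlt /arith_deriv.
rewrite [RHS](bigID (fun p => p \in primes n)) /=.
rewrite [X in _ + X]big1 ?addn0; last first.
  by move=> p /negbTE; rewrite -logn_gt0 lt0n => /negbFE/eqP ->.
rewrite -(big_filter (iota 0 N)); apply: perm_big; apply: uniq_perm.
- exact: primes_uniq.
- by rewrite filter_uniq // iota_uniq.
move=> p; rewrite mem_filter mem_iota /= add0n andbC; case: (boolP (p \in primes n)) => //=.
  rewrite mem_primes => /and3P[_ _ pd]; rewrite andbT; apply/esym; apply: leq_ltn_trans nN; exact: dvdn_leq.
by rewrite andbF.
Qed.

Lemma dlt_mul N m k : 0 < m -> 0 < k ->
  dlt N (m * k) = m * dlt N k + k * dlt N m.
Proof.
move=> m0 k0; rewrite /dlt !big_distrr -big_split /=; apply: eq_bigr => p _.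
rewrite lognM // mulnDl addnC; congr (_ + _).
  case: (posnP (logn p k)) => [->|]; first by rewrite !mul0n muln0.
  rewrite logn_gt0 mem_primes => /and3P[_ _ pk].
  by rewrite -muln_divA // mulnCA.
case: (posnP (logn p m)) => [->|]; first by rewrite !mul0n muln0.
rewrite logn_gt0 mem_primes => /and3P[_ _ pm].
by rewrite -divn_mulAC // [_ * k]mulnC mulnCA.
Qed.

Lemma deriv_mul m k : 0 < m -> 0 < k ->
  arith_deriv (m * k) = m * arith_deriv k + k * arith_deriv m.
Proof.
move=> m0 k0; have mk0 : 0 < m * k by rewrite muln_gt0 m0.
have lt1 : k <= m * k by rewrite leq_pmull.
have lt2 : m <= m * k by rewrite leq_pmulr.
rewrite !(@deriv_dlt (m * k).+1) //; exact: dlt_mul.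
Qed.

Lemma key n : 0 < n ->
  \sum_(d <- divisors n) d * ((n %/ d) * arith_deriv (n %/ d)) +
  \sum_(d <- divisors n) d ^ 2 * arith_deriv (n %/ d) = sigma n * arith_deriv n.
Proof.
move=> n0.
have -> : \sum_(d <- divisors n) d * ((n %/ d) * arith_deriv (n %/ d)) =
          \sum_(d <- divisors n) n * arith_deriv d.
  rewrite (perm_big _ (divisors_rev n n0)) big_map.
  rewrite big_seq [RHS]big_seq; apply: eq_bigr => d; rewrite -dvdn_divisors // => dd.
  by rewrite !divdivK // mulnA divnK.
rewrite /sigma big_distrl -big_split /=.
rewrite big_seq [RHS]big_seq; apply: eq_bigr => d; rewrite -dvdn_divisors // => dd.
have d0 : 0 < d by exact: dvdn_gt0 n0 dd.
have e0 : 0 < n %/ d by rewrite divn_gt0 // dvdn_leq.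
rewrite -{3}(divnK dd) mulnC deriv_mul // mulnDr.
rewrite -{1}(divnK dd); lia.
Qed.

Local Open Scope ring_scope.
Lemma sumZ (r : seq nat) (f : nat -> nat) :
  (\sum_(i <- r) (f i)%:Z)%R = (\sum_(i <- r) f i)%:Z.
Proof. by elim: r => [|a r IH]; rewrite ?big_nil // !big_cons IH PoszD. Qed.


Theorem corollary2p4 (n : nat) : (0 < n)%N ->
  dconv (fun m => m%:Z) (fun m => (m * arith_deriv m)%:Z) n =
  (sigma n * arith_deriv n)%:Z - dconv (fun m => (m ^ 2)%:Z) (fun m => (arith_deriv m)%:Z) n.
Proof.
move=> n0; rewrite -(key n n0) PoszD /dconv.
rewrite -!sumZ; rewrite addrK; apply: eq_bigr => d _; by rewrite PoszM.
Qed.
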